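(* Suppose $\alpha$ is a computable real number. Then there exists a pair $(A,E)$ of $\mathfrak{PR}$-sequences $A,E:\mathbb{N}\to\mathbb{Q}$ such that $E(\mathbb{N})$ contains elements arbitrarily close to $0$ and $|A(x)-\alpha|\le E(x)$ for all $x\in\mathbb{N}$.
   Context: $\mathbb{N}=\{0,1,2,\dots\}$. $\mathfrak{PR}$ denotes the primitive recursive functions and $\mathfrak{R}$ the (total) recursive functions $\mathbb{N}^n\to\mathbb{N}$. For $\mathcal{F}\in\{\mathfrak{PR},\mathfrak{R}\}$, an $\mathcal{F}$-sequence is a function $A:\mathbb{N}\to\mathbb{Q}$ of the form $A(x)=\frac{f(x)-g(x)}{h(x)+1}$ with $f,g,h:\mathbb{N}\to\mathbb{N}$ in $\mathcal{F}$. A real $\alpha$ is computable if there is an $\mathfrak{R}$-sequence $A$ with $|A(x)-\alpha|\le\frac1{x+1}$ for all $x$. *)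

(* Defs.v *)
From Stdlib Require Vector Fin.
From Stdlib Require Import Reals QArith Qabs Qreals.
Set Implicit Arguments.
Local Open Scope nat_scope.

Inductive code : nat -> Type :=
| CZero (n : nat) : code n
| CSucc : code 1
| CProj (n : nat) (i : Fin.t n) : code n
| CComp (m n : nat) (f : code m) (gs : Fin.t m -> code n) : code n
| CPrec (n : nat) (g : code n) (h : code (S (S n))) : code (S n)
                     (* f(0,x) = g x ; f(y+1,x) = h(y, f(y,x), x) *)
| CMu (n : nat) (f : code (S n)) : code n.
                     (* least y with f(y,x)=0 and f(z,x) defined for z<y *)

(* Big-step (relational) semantics: ev c v y  means  c(v) is defined and = y. *)
Inductive ev : forall n, code n -> Vector.t nat n -> nat -> Prop :=
| ev_zero n v : ev (@CZero n) v 0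
| ev_succ v : ev CSucc v (S (Vector.hd v))
| ev_proj n i v : ev (@CProj n i) v (Vector.nth v i)
| ev_comp m n (f : code m) (gs : Fin.t m -> code n) v (w : Vector.t nat m) y :
    (forall i, ev (gs i) v (Vector.nth w i)) -> ev f w y -> ev (CComp f gs) v y
| ev_prec0 n (g : code n) h v y :
    ev g v y -> ev (CPrec g h) (Vector.cons nat 0 n v) y
| ev_precS n (g : code n) h k v z y :
    ev (CPrec g h) (Vector.cons nat k n v) z ->
    ev h (Vector.cons nat k _ (Vector.cons nat z n v)) y ->
    ev (CPrec g h) (Vector.cons nat (S k) n v) y
| ev_mu n (f : code (S n)) v y :
    ev f (Vector.cons nat y n v) 0 ->
    (forall z, z < y -> exists r, ev f (Vector.cons nat z n v) (S r)) ->
    ev (CMu f) v y.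

Fixpoint isPRcode n (c : code n) : Prop :=
  match c with
  | CZero _ | CSucc | CProj _ => True
  | CComp f gs => isPRcode f /\ forall i, isPRcode (gs i)
  | CPrec g h => isPRcode g /\ isPRcode h
  | CMu _ => False
  end.

Definition vec1 (x : nat) : Vector.t nat 1 := Vector.cons nat x 0 (Vector.nil nat).

Definition isPR (f : nat -> nat) : Prop :=
  exists c : code 1, isPRcode c /\ forall x, ev c (vec1 x) (f x).

Definition isRec (f : nat -> nat) : Prop :=
  exists c : code 1, forall x, ev c (vec1 x) (f x).

Local Open Scope Q_scope.
Definition Fseq (F : (nat -> nat) -> Prop) (A : nat -> Q) : Prop :=
  exists f g h : nat -> nat, F f /\ F g /\ F h /\
    forall x, A x == (inject_Z (Z.of_nat (f x)) - inject_Z (Z.of_nat (g x)))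
                     / inject_Z (Z.of_nat (h x + 1)).

Definition PRseq := Fseq isPR.
Definition Rseq := Fseq isRec.

Definition computable_real (alpha : R) : Prop :=
  exists A : nat -> Q, Rseq A /\
    forall x, (Rabs (Q2R (A x) - alpha) <= 1 / (INR x + 1))%R.

(* Main.v *)
Require Import Defs.
From Stdlib Require Import Reals QArith Qabs Qreals.
From Stdlib Require Import Lia Lra Arith.
Local Open Scope nat_scope.

Definition PRn n (f : Vector.t nat n -> nat) : Prop :=
  exists c : code n, isPRcode c /\ forall v, ev c v (f v).

Fixpoint vof (m : nat) : (Fin.t m -> nat) -> Vector.t nat m :=
  match m with
  | 0 => fun _ => Vector.nil nat
  | S m' => fun F => Vector.cons nat (F Fin.F1) m' (vof m' (fun i => F (Fin.FS i)))
  end.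

Lemma vof_nth m F (i : Fin.t m) : Vector.nth (vof m F) i = F i.
Proof.
  revert F; induction i as [n|n i IH]; intros F; simpl; auto.
Qed.

Lemma vof_eq m (v : Vector.t nat m) : vof m (fun i => Vector.nth v i) = v.
Proof. induction v; simpl; auto. f_equal. exact IHv. Qed.

Lemma vof_ext m F G : (forall i, F i = G i) -> vof m F = vof m G.
Proof.
  revert F G; induction m; intros F G H; simpl; auto.
  rewrite H; f_equal. apply IHm. intros; apply H.
Qed.

Lemma PR_ext n f g : PRn n f -> (forall v, f v = g v) -> PRn n g.
Proof. intros [c [Hc Hv]] E; exists c; split; auto; intros v; rewrite <- E; auto. Qed.

Lemma fin_choice n m (P : Fin.t m -> code n -> Prop) :
  (forall i, exists c, P i c) -> exists F, forall i, P i (F i).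
Proof.
  revert P; induction m; intros P H.
  - exists (fun i => Fin.case0 (fun _ => code n) i). intros i; apply (Fin.case0 (fun i => P i _) i).
  - destruct (H Fin.F1) as [c0 Hc0].
    destruct (IHm (fun i c => P (Fin.FS i) c)) as [F HF]; [intros; apply H|].
    exists (fun i => Fin.caseS' i (fun _ => code n) c0 F).
    intros i; apply (Fin.caseS' i); simpl; auto.
Qed.

Lemma PR_zero n : PRn n (fun _ => 0).
Proof. exists (CZero n); split; simpl; auto; intros; constructor. Qed.

Lemma PR_proj n i : PRn n (fun v => Vector.nth v i).
Proof. exists (CProj i); split; simpl; auto; intros; constructor. Qed.

Lemma PR_comp m n f (gs : Fin.t m -> Vector.t nat n -> nat) :
  PRn m f -> (forall i, PRn n (gs i)) -> PRn n (fun v => f (vof m (fun i => gs i v))).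
Proof.
  intros [cf [Hcf Ef]] H.
  destruct (fin_choice n m (fun i c => isPRcode c /\ forall v, ev c v (gs i v))) as [F HF]; auto.
  exists (CComp cf F); split; simpl.
  - split; auto; intros i; apply HF.
  - intros v. apply ev_comp with (w := vof m (fun i => gs i v)); auto.
    intros i; rewrite vof_nth; apply HF.
Qed.

Lemma PR_compv m n f (B : Vector.t nat n -> Vector.t nat m) :
  PRn m f -> (forall i, PRn n (fun v => Vector.nth (B v) i)) -> PRn n (fun v => f (B v)).
Proof.
  intros Hf H. eapply PR_ext. apply (PR_comp _ _ _ _ Hf H).
  intros v; simpl. rewrite vof_eq; reflexivity.
Qed.

Lemma PR_prec n g h : PRn n g -> PRn (S (S n)) h ->
  PRn (S n) (fun v => nat_rect (fun _ => nat) (g (Vector.tl v))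
     (fun k acc => h (Vector.cons nat k _ (Vector.cons nat acc _ (Vector.tl v)))) (Vector.hd v)).
Proof.
  intros [cg [Hg Eg]] [ch [Hh Eh]].
  exists (CPrec cg ch); split; simpl; auto.
  intros v; apply (Vector.caseS' v); clear v; intros k u; simpl.
  induction k; simpl.
  - constructor; auto.
  - eapply ev_precS; eauto.
Qed.

Lemma PR_cons n m a (B : Vector.t nat n -> Vector.t nat m) :
  PRn n a -> (forall i, PRn n (fun v => Vector.nth (B v) i)) ->
  forall i, PRn n (fun v => Vector.nth (Vector.cons nat (a v) m (B v)) i).
Proof. intros Ha HB i; apply (Fin.caseS' i); simpl; auto. Qed.

Lemma PR_nil n : forall i, PRn n (fun v => Vector.nth (Vector.nil nat) i).
Proof. intros i; apply (Fin.case0 (fun i => PRn n (fun v => Vector.nth (Vector.nil nat) i)) i). Qed.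

Lemma PR_succ n f : PRn n f -> PRn n (fun v => S (f v)).
Proof.
  intros Hf.
  assert (H1 : PRn 1 (fun w => S (Vector.hd w))).
  { exists CSucc; split; simpl; auto; intros; constructor. }
  apply (PR_compv _ _ _ (fun v => Vector.cons nat (f v) 0 (Vector.nil nat)) H1).
  apply PR_cons; auto. apply PR_nil.
Qed.

Lemma PR_const n k : PRn n (fun _ => k).
Proof. induction k. apply PR_zero. apply (PR_succ _ _ IHk). Qed.

Lemma PR_hd n : PRn (S n) (fun v => Vector.hd v).
Proof.
  eapply PR_ext. apply (PR_proj _ Fin.F1).
  intros v; apply (Vector.caseS' v); reflexivity.
Qed.

Lemma PR_tl n f : PRn n f -> PRn (S n) (fun v => f (Vector.tl v)).
Proof.
  intros Hf; apply (PR_compv _ _ _ (fun v => Vector.tl v) Hf).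
  intros i. eapply PR_ext. apply (PR_proj _ (Fin.FS i)).
  intros v; apply (Vector.caseS' v); reflexivity.
Qed.

Lemma PR_vtl n : forall i, PRn (S n) (fun v => Vector.nth (Vector.tl v) i).
Proof. intros i; apply (PR_tl _ _ (PR_proj _ i)). Qed.

Lemma PR_un op n a : PRn 1 op -> PRn n a -> PRn n (fun v => op (Vector.cons nat (a v) 0 (Vector.nil nat))).
Proof.
  intros Ho Ha; apply (PR_compv _ _ _ (fun v => Vector.cons nat (a v) 0 (Vector.nil nat)) Ho).
  apply PR_cons; auto; apply PR_nil.
Qed.

Lemma PR_bin op n a b : PRn 2 op -> PRn n a -> PRn n b ->
  PRn n (fun v => op (Vector.cons nat (a v) 1 (Vector.cons nat (b v) 0 (Vector.nil nat)))).
Proof.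
  intros Ho Ha Hb; apply (PR_compv _ _ _ (fun v => Vector.cons nat (a v) 1 (Vector.cons nat (b v) 0 (Vector.nil nat))) Ho).
  apply PR_cons; auto; apply PR_cons; auto; apply PR_nil.
Qed.

Lemma PR_unop (op : nat -> nat) (g : nat) (h : nat -> nat -> nat) :
  (forall k, op k = nat_rect (fun _ => nat) g h k) ->
  PRn 2 (fun w => h (Vector.hd w) (Vector.hd (Vector.tl w))) ->
  forall n a, PRn n a -> PRn n (fun v => op (a v)).
Proof.
  intros E Hh n a Ha.
  assert (H1 : PRn 1 (fun w => op (Vector.hd w))).
  { eapply PR_ext. apply (PR_prec 0 (fun _ => g) _ (PR_const _ g) Hh).
    intros v; apply (Vector.caseS' v); intros k u; simpl. rewrite E; reflexivity. }
  apply (PR_un _ _ _ H1 Ha).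
Qed.

Lemma PR_pred n a : PRn n a -> PRn n (fun v => pred (a v)).
Proof.
  apply (PR_unop pred 0 (fun k _ => k)). intros []; reflexivity. apply PR_hd.
Qed.

Lemma PR_sg n a : PRn n a -> PRn n (fun v => match a v with 0 => 0 | S _ => 1 end).
Proof.
  apply (PR_unop (fun k => match k with 0 => 0 | S _ => 1 end) 0 (fun _ _ => 1)).
  intros []; reflexivity. apply PR_const.
Qed.

Lemma PR_nsg n a : PRn n a -> PRn n (fun v => match a v with 0 => 1 | S _ => 0 end).
Proof.
  apply (PR_unop (fun k => match k with 0 => 1 | S _ => 0 end) 1 (fun _ _ => 0)).
  intros []; reflexivity. apply PR_const.
Qed.

Lemma PR_add n a b : PRn n a -> PRn n b -> PRn n (fun v => a v + b v).
Proof.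
  intros Ha Hb.
  assert (H2 : PRn 2 (fun w => Vector.hd w + Vector.hd (Vector.tl w))).
  { eapply PR_ext.
    apply (PR_prec 1 (fun u => Vector.hd u) (fun w => S (Vector.hd (Vector.tl w)))).
    apply PR_hd. apply PR_succ. apply PR_tl. apply PR_hd.
    intros v; apply (Vector.caseS' v); intros k u; simpl. induction k; simpl; auto. }
  apply (PR_bin _ _ _ _ H2 Ha Hb).
Qed.

Lemma PR_mul n a b : PRn n a -> PRn n b -> PRn n (fun v => a v * b v).
Proof.
  intros Ha Hb.
  assert (H2 : PRn 2 (fun w => Vector.hd w * Vector.hd (Vector.tl w))).
  { eapply PR_ext.
    apply (PR_prec 1 (fun _ => 0) (fun w => Vector.hd (Vector.tl (Vector.tl w)) + Vector.hd (Vector.tl w))).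
    apply PR_zero. apply PR_add. apply (PR_tl _ (fun u => Vector.hd (Vector.tl u))), (PR_tl _ (fun u => Vector.hd u)), PR_hd. apply (PR_tl _ (fun u => Vector.hd u)), PR_hd.
    intros v; apply (Vector.caseS' v); intros k u; simpl. induction k; simpl; auto.
    all: try (rewrite IHk; ring). }
  apply (PR_bin _ _ _ _ H2 Ha Hb).
Qed.

Definition ifz (a b c : nat) := match a with 0 => b | S _ => c end.

Lemma PR_ifz n a b c : PRn n a -> PRn n b -> PRn n c -> PRn n (fun v => ifz (a v) (b v) (c v)).
Proof.
  intros Ha Hb Hc. eapply PR_ext.
  apply PR_add; apply PR_mul. apply (PR_nsg _ _ Ha). exact Hb. apply (PR_sg _ _ Ha). exact Hc.
  intros v; unfold ifz; destruct (a v); simpl; lia.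
Qed.

Lemma PR_prec' n G H K : PRn n G -> PRn (S (S n)) H -> PRn n K ->
  PRn n (fun v => nat_rect (fun _ => nat) (G v)
     (fun j acc => H (Vector.cons nat j _ (Vector.cons nat acc _ v))) (K v)).
Proof.
  intros HG HH HK.
  apply (PR_compv _ _ _ (fun v => Vector.cons nat (K v) n v) (PR_prec _ _ _ HG HH)).
  apply PR_cons; auto. apply PR_proj.
Qed.

Fixpoint prodall m : (Fin.t m -> nat) -> nat :=
  match m with
  | 0 => fun _ => 1
  | S m' => fun F => F Fin.F1 * prodall m' (fun i => F (Fin.FS i))
  end.

Lemma PR_prodall n m (G : Fin.t m -> Vector.t nat n -> nat) :
  (forall i, PRn n (G i)) -> PRn n (fun v => prodall m (fun i => G i v)).
Proof.
  revert G; induction m; intros G H; simpl.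
  - apply PR_const.
  - apply PR_mul; [auto|]. apply (IHm (fun i => G (Fin.FS i))); auto.
Qed.
Fixpoint fe {n} (c : code n) {struct c} : nat -> Vector.t nat n -> nat :=
  match c in code n return nat -> Vector.t nat n -> nat with
  | CZero _ => fun _ _ => 1
  | CSucc => fun _ v => S (S (Vector.hd v))
  | CProj i => fun _ v => S (Vector.nth v i)
  | @CComp m n f gs => fun t v =>
      ifz (prodall m (fun i => fe (gs i) t v)) 0
          (fe f t (vof m (fun i => pred (fe (gs i) t v))))
  | @CPrec n g h => fun t v =>
      nat_rect (fun _ => nat) (fe g t (Vector.tl v))
        (fun j acc => ifz acc 0 (fe h t (Vector.cons nat j _ (Vector.cons nat (pred acc) _ (Vector.tl v)))))
        (Vector.hd v)
  | @CMu n f => fun t v =>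
      pred (nat_rect (fun _ => nat) 0
        (fun z r => ifz r (ifz (fe f t (Vector.cons nat z n v)) 1
                             (ifz (pred (fe f t (Vector.cons nat z n v))) (S (S z)) 0)) r) t)
  end.

Lemma fe_PR n (c : code n) : PRn (S n) (fun v => fe c (Vector.hd v) (Vector.tl v)).
Proof.
  induction c as [n| |n i|m n f IHf gs IHgs|n g IHg h IHh|n f IHf]; simpl.
  - apply PR_const.
  - apply PR_succ, PR_succ. apply (PR_tl _ (fun u => Vector.hd u)), PR_hd.
  - apply PR_succ. apply (PR_tl _ (fun u => Vector.nth u i)), PR_proj.
  - apply PR_ifz.
    + apply (PR_prodall _ _ (fun i v => fe (gs i) (Vector.hd v) (Vector.tl v))); auto.
    + apply PR_zero.
    + apply (PR_compv _ _ _ (fun v => Vector.cons nat (Vector.hd v) m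
           (vof m (fun i => pred (fe (gs i) (Vector.hd v) (Vector.tl v))))) IHf).
      apply PR_cons. apply PR_hd.
      intros i. eapply PR_ext. apply PR_pred. apply (IHgs i).
      intros v; simpl; rewrite vof_nth; reflexivity.
  - apply (PR_prec' _ (fun v => fe g (Vector.hd v) (Vector.tl (Vector.tl v)))
      (fun w => ifz (Vector.hd (Vector.tl w)) 0
         (fe h (Vector.hd (Vector.tl (Vector.tl w)))
            (Vector.cons nat (Vector.hd w) _ (Vector.cons nat (pred (Vector.hd (Vector.tl w))) _
               (Vector.tl (Vector.tl (Vector.tl (Vector.tl w))))))))
      (fun v => Vector.hd (Vector.tl v))).
    + apply (PR_compv _ _ _ (fun v => Vector.cons nat (Vector.hd v) _ (Vector.tl (Vector.tl v))) IHg).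
      apply PR_cons. apply PR_hd.
      intros i. apply (PR_tl _ (fun u => Vector.nth (Vector.tl u) i)). apply PR_vtl.
    + apply PR_ifz. apply (PR_tl _ (fun u => Vector.hd u)), PR_hd. apply PR_zero.
      apply (PR_compv _ _ _ (fun w => Vector.cons nat (Vector.hd (Vector.tl (Vector.tl w))) _
            (Vector.cons nat (Vector.hd w) _ (Vector.cons nat (pred (Vector.hd (Vector.tl w))) _
               (Vector.tl (Vector.tl (Vector.tl (Vector.tl w))))))) IHh).
      apply PR_cons. apply (PR_tl _ (fun u => Vector.hd (Vector.tl u))), (PR_tl _ (fun u => Vector.hd u)), PR_hd.
      apply PR_cons. apply PR_hd.
      apply PR_cons. apply PR_pred. apply (PR_tl _ (fun u => Vector.hd u)), PR_hd.
      intros i.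
      apply (PR_tl _ (fun u => Vector.nth (Vector.tl (Vector.tl (Vector.tl u))) i)).
      apply (PR_tl _ (fun u => Vector.nth (Vector.tl (Vector.tl u)) i)).
      apply (PR_tl _ (fun u => Vector.nth (Vector.tl u) i)). apply PR_vtl.
    + apply (PR_tl _ (fun u => Vector.hd u)), PR_hd.
  - apply PR_pred.
    set (A := fun w : Vector.t nat (S (S (S n))) => fe f (Vector.hd (Vector.tl (Vector.tl w)))
                 (Vector.cons nat (Vector.hd w) _ (Vector.tl (Vector.tl (Vector.tl w))))).
    assert (HA : PRn _ A).
    { apply (PR_compv _ _ _ (fun w => Vector.cons nat (Vector.hd (Vector.tl (Vector.tl w))) _
                 (Vector.cons nat (Vector.hd w) _ (Vector.tl (Vector.tl (Vector.tl w))))) IHf).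
      apply PR_cons. apply (PR_tl _ (fun u => Vector.hd (Vector.tl u))), (PR_tl _ (fun u => Vector.hd u)), PR_hd.
      apply PR_cons. apply PR_hd.
      intros i.
      apply (PR_tl _ (fun u => Vector.nth (Vector.tl (Vector.tl u)) i)).
      apply (PR_tl _ (fun u => Vector.nth (Vector.tl u) i)). apply PR_vtl. }
    apply (PR_prec' _ (fun _ => 0)
      (fun w => ifz (Vector.hd (Vector.tl w)) (ifz (A w) 1 (ifz (pred (A w)) (S (S (Vector.hd w))) 0))
                  (Vector.hd (Vector.tl w)))
      (fun v => Vector.hd v)).
    + apply PR_zero.
    + assert (H1 : PRn (S (S (S n))) (fun w => Vector.hd (Vector.tl w))).
      { apply (PR_tl _ (fun u => Vector.hd u)), PR_hd. }
      apply PR_ifz; auto. apply PR_ifz; auto. apply PR_const.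
      apply PR_ifz. apply PR_pred; auto. apply PR_succ, PR_succ, PR_hd. apply PR_zero.
    + apply PR_hd.
Qed.
Lemma prodall_ext m F G : (forall i, F i = G i) -> prodall m F = prodall m G.
Proof.
  revert F G; induction m; intros F G H; simpl; auto.
Qed.

Lemma prodall_nz m F : prodall m F <> 0 -> forall i, F i <> 0.
Proof.
  revert F; induction m; intros F H i.
  - apply (Fin.case0 (fun i => F i <> 0) i).
  - simpl in H. apply (Fin.caseS' i).
    + intro E; apply H; rewrite E; reflexivity.
    + intros p. apply (IHm (fun i => F (Fin.FS i))). intro E; apply H; rewrite E; lia.
Qed.

Lemma prodall_pos m F : (forall i, F i <> 0) -> prodall m F <> 0.
Proof.
  revert F; induction m; intros F H; simpl; auto.
  specialize (IHm (fun i => F (Fin.FS i)) (fun i => H (Fin.FS i))).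
  specialize (H Fin.F1). destruct (F Fin.F1); [congruence|].
  destruct (prodall m (fun i => F (Fin.FS i))); [congruence|]. simpl; lia.
Qed.

Definition srch (a : nat -> nat) (s : nat) : nat :=
  nat_rect (fun _ => nat) 0 (fun z r => ifz r (ifz (a z) 1 (ifz (pred (a z)) (S (S z)) 0)) r) s.

Lemma srch_zero a s : srch a s = 0 -> forall z, z < s -> exists r, a z = S (S r).
Proof.
  induction s; intros H z Hz; [lia|].
  unfold srch in H; simpl in H. fold (srch a s) in H.
  destruct (srch a s) eqn:E; [|simpl in H; discriminate].
  simpl in H. destruct (a s) as [|[|r]] eqn:Ea; simpl in H; try discriminate.
  assert (z < s \/ z = s) as [Hl|Hl] by lia; auto. subst; eauto.
Qed.

Lemma srch_found a s y : srch a s = S (S y) ->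
  y < s /\ a y = 1 /\ forall z, z < y -> exists r, a z = S (S r).
Proof.
  induction s; intros H.
  - discriminate.
  - unfold srch in H; simpl in H. fold (srch a s) in H.
    destruct (srch a s) eqn:E.
    + simpl in H. destruct (a s) as [|[|r]] eqn:Ea; simpl in H; try discriminate.
      injection H; intros; subst. split; [lia|split; auto]. apply srch_zero; auto.
    + simpl in H. destruct (IHs H) as [? [? ?]]. split; [lia|auto].
Qed.

Lemma srch_spec a y : a y = 1 -> (forall z, z < y -> exists r, a z = S (S r)) ->
  forall s, srch a s = if s <=? y then 0 else S (S y).
Proof.
  intros Hy Hz s; induction s.
  - reflexivity.
  - unfold srch; cbn [nat_rect]. fold (srch a s). rewrite IHs.
    destruct (Nat.leb_spec s y); destruct (Nat.leb_spec (S s) y); try lia; cbn [ifz]; auto.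
    + destruct (Hz s) as [r Hr]; [lia|]. rewrite Hr; reflexivity.
    + assert (s = y) by lia; subst. rewrite Hy; reflexivity.
Qed.

Lemma fe_mono n (c : code n) : forall t t' v y, fe c t v = S y -> t <= t' -> fe c t' v = S y.
Proof.
  induction c as [n| |n i|m n f IHf gs IHgs|n g IHg h IHh|n f IHf]; intros t t' v y H Ht; auto.
  - simpl in *.
    destruct (prodall m (fun i => fe (gs i) t v)) eqn:Ep; [discriminate|].
    assert (Hnz : forall i, fe (gs i) t v <> 0) by (apply prodall_nz; congruence).
    assert (E : forall i, fe (gs i) t' v = fe (gs i) t v).
    { intros i. specialize (Hnz i). destruct (fe (gs i) t v) eqn:Ei; [congruence|].
      eapply IHgs; eauto. }
    rewrite (prodall_ext _ _ _ E), Ep.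
    rewrite (vof_ext m (fun i => pred (fe (gs i) t' v)) (fun i => pred (fe (gs i) t v)))
      by (intros; rewrite E; auto).
    simpl in *. eapply IHf; eauto.
  - simpl in *. revert y H. generalize (Vector.hd v) as k. intros k; induction k; intros y H; simpl in *.
    + eapply IHg; eauto.
    + destruct (nat_rect _ _ _ k) eqn:Ek in H; [discriminate|].
      rewrite (IHk _ Ek). simpl in *. eapply IHh; eauto.
  - simpl in *. fold (srch (fun z => fe f t (Vector.cons nat z n v)) t) in H.
    fold (srch (fun z => fe f t' (Vector.cons nat z n v)) t').
    destruct (srch (fun z => fe f t (Vector.cons nat z n v)) t) as [|[|y']] eqn:E; simpl in H; try discriminate.
    assert (y = y') by (simpl in H; lia); subst y. apply srch_found in E. destruct E as [Hyt [Ha Hz]].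
    rewrite (srch_spec _ y'); auto.
    + destruct (Nat.leb_spec t' y'); [lia|reflexivity].
    + eapply IHf; eauto.
    + intros z Hz'. destruct (Hz z Hz') as [r Hr]. exists r. eapply IHf; eauto.
Qed.

Lemma fin_max m (P : Fin.t m -> nat -> Prop) :
  (forall i t t', P i t -> t <= t' -> P i t') -> (forall i, exists t, P i t) ->
  exists t, forall i, P i t.
Proof.
  revert P; induction m; intros P Hm H.
  - exists 0; intros i; apply (Fin.case0 (fun i => P i 0) i).
  - destruct (H Fin.F1) as [t0 H0].
    assert (Hx : exists t, forall i, P (Fin.FS i) t).
    { apply (IHm (fun i t => P (Fin.FS i) t)); intros; [eapply Hm; eauto | apply H]. }
    destruct Hx as [t1 H1].
    exists (t0 + t1). intros i; apply (Fin.caseS' i).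
    + eapply Hm; eauto; lia.
    + intros p; eapply Hm; eauto; lia.
Qed.

Lemma nat_max y (P : nat -> nat -> Prop) :
  (forall i t t', P i t -> t <= t' -> P i t') -> (forall z, z < y -> exists t, P z t) ->
  exists t, forall z, z < y -> P z t.
Proof.
  intros Hm; induction y; intros H.
  - exists 0; intros; lia.
  - destruct IHy as [t0 H0]; [intros; apply H; lia|].
    destruct (H y) as [t1 H1]; [lia|].
    exists (t0 + t1); intros z Hz.
    assert (z < y \/ z = y) as [Hl|Hl] by lia.
    + eapply Hm; eauto; lia.
    + subst; eapply Hm; eauto; lia.
Qed.

Fixpoint fe_complete n (c : code n) v y (H : ev c v y) {struct H} : exists t, fe c t v = S y.
Proof.
  destruct H.
  - exists 0; reflexivity.
  - exists 0; reflexivity.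
  - exists 0; reflexivity.
  - rename H into Hgs, H0 into Hf.
    destruct (fin_max m (fun i t => fe (gs i) t v = S (Vector.nth w i))) as [t1 H1].
    { intros; eapply fe_mono; eauto. }
    { intros i; exact (fe_complete _ _ _ _ (Hgs i)). }
    destruct (fe_complete _ _ _ _ Hf) as [t2 H2].
    exists (t1 + t2). simpl.
    assert (E : forall i, fe (gs i) (t1 + t2) v = S (Vector.nth w i)).
    { intros; eapply fe_mono; eauto; lia. }
    assert (Hp : prodall m (fun i => fe (gs i) (t1 + t2) v) <> 0).
    { apply prodall_pos; intros i; rewrite E; discriminate. }
    destruct (prodall m (fun i => fe (gs i) (t1 + t2) v)); [congruence|]. simpl.
    rewrite (vof_ext m _ (fun i => Vector.nth w i)) by (intros; rewrite E; reflexivity).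
    rewrite vof_eq. eapply fe_mono; eauto; lia.
  - destruct (fe_complete _ _ _ _ H) as [t Ht]. exists t; simpl; auto.
  - rename H into H1, H0 into H2.
    destruct (fe_complete _ _ _ _ H1) as [t1 E1].
    destruct (fe_complete _ _ _ _ H2) as [t2 E2].
    exists (t1 + t2).
    assert (E1' : fe (CPrec g h) (t1 + t2) (Vector.cons nat k n v) = S z) by (eapply fe_mono; eauto; lia).
    simpl in E1' |- *. rewrite E1'. simpl. eapply fe_mono; eauto; lia.
  - rename H into H1, H0 into H2.
    destruct (fe_complete _ _ _ _ H1) as [t1 E1].
    destruct (nat_max y (fun z t => exists r, fe f t (Vector.cons nat z n v) = S (S r))) as [t2 E2].
    { intros i t t' [r Hr] Hle. exists r. eapply fe_mono; eauto. }
    { intros z Hz. destruct (H2 z Hz) as [r Hr].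
      destruct (fe_complete _ _ _ _ Hr) as [t Ht]. exists t, r; exact Ht. }
    exists (t1 + t2 + S y). simpl.
    fold (srch (fun z => fe f (t1 + t2 + S y) (Vector.cons nat z n v)) (t1 + t2 + S y)).
    rewrite (srch_spec _ y).
    + destruct (Nat.leb_spec (t1 + t2 + S y) y); [lia|reflexivity].
    + eapply fe_mono; eauto; lia.
    + intros z Hz. destruct (E2 z Hz) as [r Hr]. exists r. eapply fe_mono; eauto; lia.
Qed.
Lemma PR_isPR F : PRn 1 (fun v => F (Vector.hd v)) -> isPR F.
Proof. intros [c [Hc Ev]]; exists c; split; auto; intros x; exact (Ev (vec1 x)). Qed.

Lemma PR_fe (c : code 1) n a b : PRn n a -> PRn n b -> PRn n (fun v => fe c (b v) (vec1 (a v))).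
Proof.
  intros Ha Hb.
  apply (PR_compv _ _ _ (fun v => Vector.cons nat (b v) 1 (vec1 (a v))) (fe_PR 1 c)).
  apply PR_cons; auto. apply PR_cons; auto. apply PR_nil.
Qed.

Definition Ks (P : nat -> nat) (s : nat) : nat :=
  nat_rect (fun _ => nat) 0 (fun j r => ifz (P j) r (S j)) s.

Lemma Ks_found P s j : Ks P s = S j -> j < s /\ P j <> 0.
Proof.
  induction s; intros H; [discriminate|].
  unfold Ks in H; cbn [nat_rect] in H; fold (Ks P s) in H.
  destruct (P s) eqn:E; simpl in H.
  - destruct (IHs H); split; auto.
  - injection H as <-; split; [lia|congruence].
Qed.

Lemma Ks_exists P s j0 : j0 < s -> P j0 <> 0 -> exists j, Ks P s = S j /\ j0 <= j.
Proof.
  induction s; intros Hs Hp; [lia|].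
  unfold Ks; cbn [nat_rect]; fold (Ks P s).
  assert (j0 < s \/ j0 = s) as [Hl|Hl] by lia.
  - destruct (P s) eqn:E; simpl.
    + apply IHs; auto.
    + exists s; split; auto; lia.
  - subst. destruct (P s) eqn:E; [congruence|]. simpl. exists s; split; auto.
Qed.

Section Build.
Variables (cf cg ch : code 1) (M : nat).
Definition okf x j := fe cf x (vec1 j) * fe cg x (vec1 j) * fe ch x (vec1 j).
Definition Kx x := Ks (okf x) (S x).
Definition fA x := ifz (Kx x) 0 (pred (fe cf x (vec1 (pred (Kx x))))).
Definition gA x := ifz (Kx x) 0 (pred (fe cg x (vec1 (pred (Kx x))))).
Definition hA x := ifz (Kx x) 0 (pred (fe ch x (vec1 (pred (Kx x))))).
Definition fE x := ifz (Kx x) M 1.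
Definition gE (x : nat) := 0.
Definition hE x := ifz (Kx x) 0 (pred (Kx x)).

Lemma PR_Kx : PRn 1 (fun v => Kx (Vector.hd v)).
Proof.
  unfold Kx, Ks.
  apply (PR_prec' 1 (fun _ => 0)
     (fun w => ifz (okf (Vector.hd (Vector.tl (Vector.tl w))) (Vector.hd w))
                   (Vector.hd (Vector.tl w)) (S (Vector.hd w)))
     (fun v => S (Vector.hd v))).
  - apply PR_zero.
  - assert (Hx : PRn 3 (fun w : Vector.t nat 3 => Vector.hd (Vector.tl (Vector.tl w)))).
    { apply (PR_tl _ (fun u => Vector.hd (Vector.tl u))), (PR_tl _ (fun u => Vector.hd u)), PR_hd. }
    apply PR_ifz.
    + unfold okf. apply PR_mul; [apply PR_mul|]; apply PR_fe; auto; apply PR_hd.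
    + apply (PR_tl _ (fun u => Vector.hd u)), PR_hd.
    + apply PR_succ, PR_hd.
  - apply PR_succ, PR_hd.
Qed.

Lemma PR_Kf (c : code 1) : PRn 1 (fun v => ifz (Kx (Vector.hd v)) 0 (pred (fe c (Vector.hd v) (vec1 (pred (Kx (Vector.hd v))))))).
Proof.
  apply PR_ifz. apply PR_Kx. apply PR_zero. apply PR_pred. apply PR_fe. apply PR_pred, PR_Kx. apply PR_hd.
Qed.
End Build.

Lemma Q2R_frac a b c :
  Q2R ((inject_Z (Z.of_nat a) - inject_Z (Z.of_nat b)) / inject_Z (Z.of_nat (c + 1))) =
  ((INR a - INR b) / (INR c + 1))%R.
Proof.
  rewrite Q2R_div.
  - rewrite Q2R_minus. unfold Q2R; simpl.
    rewrite !INR_IZR_INZ. rewrite Znat.Nat2Z.inj_add, plus_IZR. simpl. field.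
    pose proof (pos_INR c). rewrite INR_IZR_INZ in H. lra.
  - unfold Qeq; simpl. lia.
Qed.

Lemma fe_val (c : code 1) (F : nat -> nat) (Hc : forall x, ev c (vec1 x) (F x)) j x a :
  fe c x (vec1 j) = S a -> a = F j.
Proof.
  intros H. destruct (fe_complete _ _ _ _ (Hc j)) as [t Ht].
  assert (H1 : fe c (x + t) (vec1 j) = S a) by (eapply fe_mono; eauto; lia).
  assert (H2 : fe c (x + t) (vec1 j) = S (F j)) by (eapply fe_mono; eauto; lia).
  congruence.
Qed.

Local Close Scope nat_scope.
Theorem mainTheorem18 (alpha : R) :
  computable_real alpha ->
  exists A E : nat -> Q, PRseq A /\ PRseq E /\
    (forall eps : Q, 0 < eps -> exists x, Qabs (E x) < eps) /\
    (forall x, (Rabs (Q2R (A x) - alpha) <= Q2R (E x))%R).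
Proof.
  intros [A [[f [g [h [[cf Hf] [[cg Hg] [[ch Hh] HA]]]]]] Hb]].
  destruct (INR_unbounded (Rabs alpha)) as [M HM].
  set (mk := fun (p q r : nat -> nat) (x : nat) =>
     ((inject_Z (Z.of_nat (p x)) - inject_Z (Z.of_nat (q x))) / inject_Z (Z.of_nat (r x + 1)))%Q).
  exists (mk (fA cf cg ch) (gA cf cg ch) (hA cf cg ch)),
         (mk (fE cf cg ch M) gE (hE cf cg ch)).
  split; [|split; [|split]].
  - exists (fA cf cg ch), (gA cf cg ch), (hA cf cg ch).
    split; [|split; [|split]]; try (apply PR_isPR, PR_Kf).
    intros; apply Qeq_refl.
  - exists (fE cf cg ch M), gE, (hE cf cg ch).
    split; [|split; [|split]].
    + apply PR_isPR. apply PR_ifz. apply PR_Kx. apply PR_const. apply PR_const.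
    + apply PR_isPR. apply PR_zero.
    + apply PR_isPR. apply PR_ifz. apply PR_Kx. apply PR_zero. apply PR_pred, PR_Kx.
    + intros; apply Qeq_refl.
  - intros eps Heps.
    assert (Heps' : (0 < Q2R eps)%R) by (rewrite <- Q2R_0 || idtac; apply Qlt_Rlt in Heps; unfold Q2R in Heps at 1; simpl in Heps; lra).
    destruct (archimed_cor1 _ Heps') as [N [HN HN0]].
    set (k := pred N).
    destruct (fe_complete _ _ _ _ (Hf k)) as [t1 E1].
    destruct (fe_complete _ _ _ _ (Hg k)) as [t2 E2].
    destruct (fe_complete _ _ _ _ (Hh k)) as [t3 E3].
    set (x := (k + t1 + t2 + t3)%nat).
    assert (Hok : okf cf cg ch x k <> 0%nat).
    { unfold okf.
      rewrite (fe_mono _ _ _ _ _ _ E1) by lia; rewrite (fe_mono _ _ _ _ _ _ E2) by lia;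
      rewrite (fe_mono _ _ _ _ _ _ E3) by lia. simpl; lia. }
    destruct (Ks_exists (okf cf cg ch x) (S x) k) as [j [Ej Hkj]]; [lia|auto|].
    exists x. unfold mk, fE, hE, gE, Kx. rewrite Ej. simpl ifz.
    apply Rlt_Qlt.
    assert (Hpos : 0 <= (inject_Z (Z.of_nat 1) - inject_Z (Z.of_nat 0)) / inject_Z (Z.of_nat (j + 1))).
    { apply Rle_Qle. rewrite Q2R_frac. replace (Q2R 0) with 0%R by (unfold Q2R; simpl; ring).
      pose proof (pos_INR j). simpl pred; simpl INR. apply Rlt_le. apply Rdiv_lt_0_compat; lra. }
    rewrite (Qeq_eqR _ _ (Qabs_pos _ Hpos)). rewrite Q2R_frac.
    simpl pred. simpl INR.
    assert (INR k + 1 = INR N)%R.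
    { unfold k. destruct N; [lia|]. rewrite S_INR; simpl; lra. }
    assert (INR k <= INR j)%R by (apply le_INR; auto).
    apply Rle_lt_trans with (/ INR N)%R; auto.
    rewrite <- H. unfold Rdiv. rewrite Rminus_0_r, Rmult_1_l.
    apply Rinv_le_contravar; [pose proof (pos_INR k); lra | lra].
  - intros x. unfold mk, fA, gA, hA, fE, gE, hE.
    destruct (Kx cf cg ch x) as [|j] eqn:EK; simpl ifz.
    + rewrite !Q2R_frac. simpl INR.
      replace ((0-0)/(0+1))%R with 0%R by field. replace ((INR M - 0)/(0+1))%R with (INR M) by field.
      rewrite Rminus_0_l, Rabs_Ropp. lra.
    + simpl pred. unfold Kx in EK. apply Ks_found in EK. destruct EK as [_ Hok].
      unfold okf in Hok.
      destruct (fe cf x (vec1 j)) as [|a] eqn:Ea; [simpl in Hok; lia|].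
      destruct (fe cg x (vec1 j)) as [|b] eqn:Eb; [simpl in Hok; lia|].
      destruct (fe ch x (vec1 j)) as [|c] eqn:Ec; [simpl in Hok; lia|].
      simpl pred.
      rewrite (fe_val _ _ Hf _ _ _ Ea), (fe_val _ _ Hg _ _ _ Eb), (fe_val _ _ Hh _ _ _ Ec).
      rewrite <- (Qeq_eqR _ _ (HA j)). rewrite Q2R_frac.
      simpl INR. unfold Rdiv. rewrite Rminus_0_r, Rmult_1_l. 
      specialize (Hb j). unfold Rdiv in Hb. rewrite Rmult_1_l in Hb. exact Hb.
Qed.
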